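(* Let $\gamma\to_d\gamma'$ be a smooth d-step. Then: (i) for every $e\in\mathrm{Edges}$, $e$ is non-smooth in $\gamma$ iff $e$ is non-smooth in $\gamma'$; (ii) for every $e\in\mathrm{Edges}$ non-smooth in $\gamma$, $\mathrm{rank}_\gamma(e)=\mathrm{rank}_{\gamma'}(e)$; (iii) $\mathrm{sum}_d\gamma'>\mathrm{sum}_d\gamma$.
   Context: Let $G$ be a finite, connected, undirected graph with node set $V$ and a distinguished node $r$ (the root); $\mathrm{Edges}=\{(p,q)\in V\times V : p,q\text{ adjacent}\}$ (both orientations). Each node $p$ has a fixed ordered list $N(p)$ of its neighbours. A configuration $\gamma$ assigns to each node $p$ a value $\gamma.p.d\in\mathbb N$ and a neighbour $\gamma.p.par\in N(p)$. For a non-root $p$ let $Dist_p(\gamma)=\min\{\gamma.q.d+1 : q\in N(p)\}$. Algorithm BFS: Root enabled iff $\gamma.r.d\neq 0$, executing sets $r.d:=0$. Non-root $p$, action CD: enabled iff $\gamma.p.d\ne Dist_p(\gamma)$, executing sets $p.d:=Dist_p(\gamma)$. Non-root $p$, action CP: enabled iff $\gamma.p.d=Dist_p(\gamma)$ and $\gamma.q_0.d+1\neq\gamma.p.d$ with $q_0=\gamma.p.par$; executing sets $p.par$ to the first $q\in N(p)$ with $\gamma.q.d+1=\gamma.p.d$. A step $\gamma\to\gamma'$ holds iff a nonempty set $S$ of enabled nodes simultaneously execute their enabled action (evaluated in $\gamma$), others unchanged. A d-step $\gamma\to_d\gamma'$ is a step with $\gamma.r.d=\gamma'.r.d$ and $\gamma.p.d\neq\gamma'.p.d$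 for some $p$. An edge $(p,q)$ is smooth in $\gamma$ if $|\gamma.p.d-\gamma.q.d|\le 1$, non-smooth otherwise. A d-step $\gamma\to_d\gamma'$ is smooth if every node $p$ with $\gamma'.p.d\neq\gamma.p.d$ has all its edges $(p,q)$, $q\in N(p)$, smooth in $\gamma$; otherwise it is non-smooth. $\mathrm{rank}_\gamma(p,q)=\min(\gamma.p.d,\gamma.q.d)$. $\mathrm{sum}_d\gamma=\sum_{q\in V}\gamma.q.d$. *)

(* Defs.v *)
From mathcomp Require Import all_boot.
Set Implicit Arguments. Unset Strict Implicit. Unset Printing Implicit Defensive.

Record config (V : finType) := Config { d : V -> nat; par : V -> V }.

Section BFS.
Variables (V : finType) (adj : rel V) (N : V -> seq V) (r : V).

Definition valid_config (g : config V) : Prop := forall p, par g p \in N p.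

(* Dist_p(g) = min { g.q.d + 1 : q in N(p) }  (N(p) nonempty for non-root p
   in a connected graph with >= 2 nodes; the value for empty N(p) is irrelevant). *)
Definition Dist (g : config V) (p : V) : nat :=
  match N p with
  | [::] => 0
  | q :: s => foldr (fun q' m => minn (d g q').+1 m) (d g q).+1 s
  end.

Definition root_enabled (g : config V) : bool := d g r != 0.
Definition CD_enabled (g : config V) (p : V) : bool := (p != r) && (d g p != Dist g p).
Definition CP_enabled (g : config V) (p : V) : bool :=
  [&& p != r, d g p == Dist g p & (d g (par g p)).+1 != d g p].
Definition enabled (g : config V) (p : V) : bool :=
  if p == r then root_enabled g else CD_enabled g p || CP_enabled g p.

Definition first_par (g : config V) (p : V) : V :=
  nth p (N p) (find (fun q => (d g q).+1 == d g p) (N p)).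

Definition executes (g g' : config V) (p : V) : Prop :=
  if p == r then d g' p = 0 /\ par g' p = par g p
  else if CD_enabled g p then d g' p = Dist g p /\ par g' p = par g p
  else d g' p = d g p /\ par g' p = first_par g p.

Definition step (g g' : config V) : Prop :=
  exists S : {set V},
    [/\ S != set0,
        (forall p, p \in S -> enabled g p /\ executes g g' p)
      & (forall p, p \notin S -> d g' p = d g p /\ par g' p = par g p)].

Definition dstep (g g' : config V) : Prop :=
  [/\ step g g', d g r = d g' r & exists p, d g p <> d g' p].

Definition smooth_edge (g : config V) (p q : V) : bool :=
  (d g p <= (d g q).+1) && (d g q <= (d g p).+1).

Definition smooth_dstep (g g' : config V) : Prop :=
  dstep g g' /\
  (forall p, d g' p <> d g p -> forall q, q \in N p -> smooth_edge g p q).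

Definition rank (g : config V) (p q : V) : nat := minn (d g p) (d g q).

Definition sum_d (g : config V) : nat := \sum_(q : V) d g q.

End BFS.

(* Main.v *)
Require Import Defs.
From mathcomp Require Import all_boot.
From mathcomp Require Import zify.

Section Aux.
Variable V : finType.

Lemma foldr_spec (f : V -> nat) q s :
  (forall x, x \in q :: s -> foldr (fun q' m => minn (f q').+1 m) (f q).+1 s <= (f x).+1) /\
  exists2 x, x \in q :: s & foldr (fun q' m => minn (f q').+1 m) (f q).+1 s = (f x).+1.
Proof.
elim: s => [|a s [IH1 [y Hy IH2]]] /=.
  split; first by move=> x; rewrite inE => /eqP ->.
  by exists q; rewrite ?inE.
set m := foldr _ _ s in IH1 IH2 *.
split.
  move=> x; rewrite !inE => /orP [/eqP ->|/orP [/eqP ->|Hx]].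
  - have := IH1 q; rewrite inE eqxx => /(_ isT); lia.
  - lia.
  - have := IH1 x; rewrite inE Hx orbT => /(_ isT); lia.
case: (leqP (f a).+1 m) => H.
  exists a; first by rewrite !inE eqxx orbT.
  lia.
exists y; last lia.
move: Hy; rewrite !inE => /orP [->|->] //; by rewrite !orbT.
Qed.

Lemma connect_step (e : rel V) x y : connect e x y -> x != y -> exists z, e x z.
Proof.
move/connectP=> [s Hp ->]; case: s Hp => [|z s] /=; first by rewrite eqxx.
by move/andP=> [H _] _; exists z.
Qed.
End Aux.

Theorem lemma5 (V : finType) (adj : rel V) (N : V -> seq V) (r : V)
    (adj_sym : symmetric adj) (adj_irr : irreflexive adj)
    (adj_conn : forall p q : V, connect adj p q)
    (N_uniq : forall p, uniq (N p))
    (N_adj : forall p q, (q \in N p) = adj p q)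
    (g g' : config V) (g_valid : valid_config N g) :
  smooth_dstep N r g g' ->
  [/\ (forall p q, adj p q -> ~~ smooth_edge g p q = ~~ smooth_edge g' p q),
      (forall p q, adj p q -> ~~ smooth_edge g p q -> rank g p q = rank g' p q)
    & sum_d g' > sum_d g].
Proof.
move=> [[[S [_ HS HnS] Hr [p0 Hp0]]] Hsm].
have Dup : forall p q, q \in N p -> Dist N g p <= (d g q).+1.
  move=> p q; rewrite /Dist; case: (N p) => [|a s] //.
  by move=> Hq; have [H _] := @foldr_spec _ (d g) a s; apply: H.
have Ch : forall p, d g' p <> d g p -> d g' p = Dist N g p /\ d g p < Dist N g p.
  move=> p Hp.
  have Hpr : p != r by apply/eqP=> E; subst p; apply: Hp; rewrite Hr.
  have HpS : p \in S.
    by apply/negPn/negP=> /HnS [E _]; apply: Hp.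
  have [_ Hex] := HS p HpS.
  move: Hex; rewrite /executes (negbTE Hpr).
  case: ifP => HCD [E _]; last by exfalso; apply: Hp.
  split=> //.
  have [z Hz] := @connect_step _ _ _ _ (adj_conn p r) Hpr.
  rewrite -N_adj in Hz.
  have Hne : N p != [::] by case: (N p) Hz.
  have [x Hx Ex] : exists2 x, x \in N p & Dist N g p = (d g x).+1.
    rewrite /Dist; case: (N p) Hne => [|a s] // _.
    by have [_ H] := @foldr_spec _ (d g) a s.
  have := Hsm p Hp x Hx; rewrite /smooth_edge => /andP [H1 H2].
  move: HCD; rewrite /CD_enabled Hpr /= => /eqP HCD. lia.
have Sm : forall p q, adj p q -> d g' p <> d g p ->
    smooth_edge g p q /\ smooth_edge g' p q.
  move=> p q Hpq Hp.
  have HqN : q \in N p by rewrite N_adj.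
  have Hs := Hsm p Hp q HqN.
  split=> //.
  have [E1 L1] := Ch p Hp.
  have U1 := Dup p q HqN.
  move: Hs; rewrite /smooth_edge => /andP [H1 H2].
  case: (boolP (d g' q == d g q)) => [/eqP Eq|/eqP Hq].
    apply/andP; split; lia.
  have [E2 L2] := Ch q Hq.
  have HpN : p \in N q by rewrite N_adj adj_sym.
  have U2 := Dup q p HpN.
  apply/andP; split; lia.
have symS : forall (g0 : config V) (p q : V), smooth_edge g0 p q = smooth_edge g0 q p.
  by move=> g0 p q; rewrite /smooth_edge andbC.
split.
- move=> p q Hpq.
  case: (boolP (d g' p == d g p)) => [/eqP Ep|/eqP Ep]; last first.
    by have [-> ->] := Sm p q Hpq Ep.
  case: (boolP (d g' q == d g q)) => [/eqP Eq|/eqP Eq]; last first.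
    by have [H1 H2] := Sm q p (etrans (adj_sym q p) Hpq) Eq; rewrite symS H1 symS H2.
  by rewrite /smooth_edge Ep Eq.
- move=> p q Hpq Hns.
  have Ep : d g' p = d g p.
    case: (boolP (d g' p == d g p)) => [/eqP //|/eqP E].
    by have [H _] := Sm p q Hpq E; rewrite H in Hns.
  have Eq : d g' q = d g q.
    case: (boolP (d g' q == d g q)) => [/eqP //|/eqP E].
    have [H _] := Sm q p (etrans (adj_sym q p) Hpq) E.
    by rewrite symS H in Hns.
  by rewrite /rank Ep Eq.
- have Le : forall x, d g x <= d g' x.
    move=> x; case: (boolP (d g' x == d g x)) => [/eqP ->//|/eqP Ex].
    have [E L] := Ch x Ex; lia.
  have Lt : d g p0 < d g' p0 by have := Le p0; lia.
  rewrite /sum_d (bigD1 p0) //= [X in _ < X](bigD1 p0) //=.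
  have : \sum_(i | i != p0) d g i <= \sum_(i | i != p0) d g' i.
    by apply: leq_sum => i _.
  lia.
Qed.
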